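(* Let $X=\{x_1,\dots,x_m\} \subset \mathbb{R}^n$ be a finite set of vectors, $\lambda \ge 0$, and $w_{ij} \ge 0$ for $j=2,\dots,m$, $i=1,\dots,j-1$. For $z = \begin{bmatrix} z_1^T & \dots & z_m^T\end{bmatrix}^T \in \mathbb{R}^{mn}$ (with $z_i \in \mathbb{R}^n$) define \[ \phi(z) = \sum_{i=1}^m \|x_i - z_i\|^2 + \lambda \sum_{j=2}^m \sum_{i=1}^{j-1} w_{ij}\, s\bigl(\|z_i - z_j\|\bigr), \] where $s:\mathbb{R}\to\{0,1\}$ is given by $s(0)=0$ and $s(u)=1$ for $u \neq 0$, and, for $\alpha>0$, \[ g(z;\alpha) = \sum_{i=1}^m \|x_i - z_i\|^2 + \lambda \sum_{j=2}^m \sum_{i=1}^{j-1} w_{ij}\Bigl(1 - e^{-\alpha \|z_i - z_j\|^2}\Bigr). \] Let $\{\alpha^t\}$ be a sequence of positive scalars with $\alpha^{t+1} > \alpha^t$ for all $t$ and $\lim_{t\to\infty} \alpha^t = +\infty$. For each $\alpha>0$, let $z(\alpha)$ be a global minimizer of $g(\cdot;\alpha)$ over $\mathbb{R}^{mn}$. Then: (i) the sequence $\{g(z(\alpha^t);\alpha^t)\}$ converges; (ii) the sequence $\{z(\alpha^t)\}$ has limit points; (iii) every limit point of $\{z(\alpha^t)\}$ is a global minimizer of $\phi$ over $\mathbb{R}^{mn}$.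
   Context: $\|\cdot\|$ denotes the Euclidean norm. *)

(* Defs.v *)
From HB Require Import structures.
From mathcomp Require Import all_boot all_order all_algebra.
From mathcomp Require Import all_classical all_reals all_analysis.
Set Implicit Arguments. Unset Strict Implicit. Unset Printing Implicit Defensive.
Import Order.TTheory GRing.Theory Num.Theory.
Local Open Scope ring_scope.

Definition enorm (R : realType) (n : nat) (v : 'rV[R]_n) : R :=
  Num.sqrt (\sum_(k < n) (v 0 k) ^+ 2).

Definition sfun (R : realType) (u : R) : R := if u == 0 then 0 else 1.

(* phi(z) ; z : 'I_m -> 'rV_n represents z = [z_1; ...; z_m] in R^{mn};
   the pair sum over 1 <= i < j <= m is written with 0-based indices i < j *)
Definition phi (R : realType) (m n : nat) (x : 'I_m -> 'rV[R]_n) (lam : R)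
  (w : 'I_m -> 'I_m -> R) (z : 'I_m -> 'rV[R]_n) : R :=
  \sum_(i < m) (enorm (x i - z i)) ^+ 2 +
  lam * \sum_(j < m) \sum_(i < m | (i < j)%N) w i j * sfun (enorm (z i - z j)).

Definition gfun (R : realType) (m n : nat) (x : 'I_m -> 'rV[R]_n) (lam : R)
  (w : 'I_m -> 'I_m -> R) (z : 'I_m -> 'rV[R]_n) (a : R) : R :=
  \sum_(i < m) (enorm (x i - z i)) ^+ 2 +
  lam * \sum_(j < m) \sum_(i < m | (i < j)%N)
          w i j * (1 - expR (- (a * (enorm (z i - z j)) ^+ 2))).

Definition cdist (R : realType) (m n : nat) (z y : 'I_m -> 'rV[R]_n) : R :=
  Num.sqrt (\sum_(i < m) (enorm (z i - y i)) ^+ 2).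

Definition seq_limit_point (R : realType) (m n : nat) (u : nat -> 'I_m -> 'rV[R]_n)
  (p : 'I_m -> 'rV[R]_n) : Prop :=
  forall eps : R, 0 < eps -> forall N : nat, exists t : nat, (N <= t)%N /\ cdist (u t) p < eps.

(* Main.v *)
Require Import Defs.
From HB Require Import structures.
From mathcomp Require Import all_boot all_order all_algebra.
From mathcomp Require Import all_classical all_reals all_analysis.
From mathcomp Require Import ring lra.
Import Order.TTheory GRing.Theory Num.Theory numFieldNormedType.Exports.
Local Open Scope classical_set_scope.
Local Open Scope ring_scope.

Lemma enorm_sq (R : realType) (n : nat) (v : 'rV[R]_n) :
  enorm v ^+ 2 = \sum_(k < n) (v 0 k) ^+ 2.
Proof. by rewrite /enorm sqr_sqrtr // sumr_ge0 // => k _; exact: sqr_ge0. Qed.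

Lemma le_sum1 (R : realType) (I : finType) (F : I -> R) (i : I) :
  (forall j, 0 <= F j) -> F i <= \sum_j F j.
Proof.
move=> F0; rewrite (bigD1 i) //= lerDl sumr_ge0 // => j _; exact: F0.
Qed.

Lemma term_ge0 (R : realType) (a d : R) : 0 <= a -> 0 <= 1 - expR (- (a * d ^+ 2)).
Proof.
move=> a0; rewrite subr_ge0 -expR0 ler_expR lerNl oppr0 mulr_ge0 //; exact: sqr_ge0.
Qed.

Lemma g_mono (R : realType) (m n : nat) (x : 'I_m -> 'rV[R]_n) (lam : R)
  (w : 'I_m -> 'I_m -> R) (z : 'I_m -> 'rV[R]_n) (a b : R) :
  0 <= lam -> (forall i j : 'I_m, (i < j)%N -> 0 <= w i j) -> a <= b ->
  gfun x lam w z a <= gfun x lam w z b.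
Proof.
move=> hl hw ab; rewrite /gfun lerD2l ler_wpM2l // ler_sum // => j _.
rewrite ler_sum // => i ij; rewrite ler_wpM2l ?hw // lerD2l lerN2 ler_expR lerN2.
by rewrite ler_wpM2r // sqr_ge0.
Qed.

Lemma g_le_phi (R : realType) (m n : nat) (x : 'I_m -> 'rV[R]_n) (lam : R)
  (w : 'I_m -> 'I_m -> R) (z : 'I_m -> 'rV[R]_n) (a : R) :
  0 <= lam -> (forall i j : 'I_m, (i < j)%N -> 0 <= w i j) ->
  gfun x lam w z a <= phi x lam w z.
Proof.
move=> hl hw; rewrite /gfun /phi lerD2l ler_wpM2l // ler_sum // => j _.
rewrite ler_sum // => i ij; rewrite ler_wpM2l ?hw //.
have [->|hne] := eqVneq (enorm (z i - z j)) 0.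
  by rewrite /Defs.sfun eqxx expr0n /= mulr0 oppr0 expR0 subrr.
rewrite /Defs.sfun (negbTE hne).
by rewrite lerBlDr lerDl ltW // expR_gt0.
Qed.

Lemma Q_le_g (R : realType) (m n : nat) (x : 'I_m -> 'rV[R]_n) (lam : R)
  (w : 'I_m -> 'I_m -> R) (z : 'I_m -> 'rV[R]_n) (a : R) :
  0 <= lam -> (forall i j : 'I_m, (i < j)%N -> 0 <= w i j) -> 0 <= a ->
  \sum_(i < m) (enorm (x i - z i)) ^+ 2 <= gfun x lam w z a.
Proof.
move=> hl hw ha; rewrite /gfun lerDl mulr_ge0 // sumr_ge0 // => j _.
rewrite sumr_ge0 // => i ij; rewrite mulr_ge0 ?hw //; exact: term_ge0.
Qed.

Lemma part1 (R : realType) (m n : nat) (x : 'I_m -> 'rV[R]_n) (lam : R)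
  (w : 'I_m -> 'I_m -> R) (alpha : nat -> R) (zf : R -> 'I_m -> 'rV[R]_n)
  (hlam : 0 <= lam)
  (hw : forall i j : 'I_m, (i < j)%N -> 0 <= w i j)
  (hapos : forall t, 0 < alpha t)
  (hinc : forall t, alpha t < alpha t.+1)
  (hmin : forall a : R, 0 < a -> forall y : 'I_m -> 'rV[R]_n,
            gfun x lam w (zf a) a <= gfun x lam w y a) :
  cvgn (fun t => gfun x lam w (zf (alpha t)) (alpha t)).
Proof.
apply: nondecreasing_is_cvgn.
  apply/nondecreasing_seqP => t.
  apply: le_trans (hmin _ (hapos t) (zf (alpha t.+1))) _.
  by apply: g_mono => //; exact: ltW (hinc t).
exists (phi x lam w x) => _ [t _ <-].
apply: le_trans (hmin _ (hapos t) x) _; exact: g_le_phi.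
Qed.

Lemma coord_bound (R : realType) (m n : nat) (x : 'I_m -> 'rV[R]_n) (lam : R)
  (w : 'I_m -> 'I_m -> R) (z : 'I_m -> 'rV[R]_n) (a : R)
  (hlam : 0 <= lam)
  (hw : forall i j : 'I_m, (i < j)%N -> 0 <= w i j)
  (ha : 0 <= a)
  (hz : gfun x lam w z a <= phi x lam w x) (i : 'I_m) (k : 'I_n) :
  `|z i 0 k| <= \sum_(i0 < m) \sum_(k0 < n) `|x i0 0 k0| + 1 + phi x lam w x.
Proof.
have h1 : (x i 0 k - z i 0 k) ^+ 2 <= phi x lam w x.
  apply: le_trans _ hz; apply: le_trans _ (@Q_le_g _ _ _ x lam w z a hlam hw ha).
  apply: le_trans _ (@le_sum1 _ _ (fun i => enorm (x i - z i) ^+ 2) i _); last first.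
    by move=> j; exact: sqr_ge0.
  rewrite enorm_sq.
  apply: le_trans _ (@le_sum1 _ _ (fun k => ((x i - z i) 0 k) ^+ 2) k _); last first.
    by move=> j; exact: sqr_ge0.
  by rewrite !mxE.
have h2 : `|x i 0 k| <= \sum_(i0 < m) \sum_(k0 < n) `|x i0 0 k0|.
  apply: le_trans _ (@le_sum1 _ _ (fun i0 => \sum_(k0 < n) `|x i0 0 k0|) i _); last first.
    by move=> j; rewrite sumr_ge0.
  exact: (@le_sum1 _ _ (fun k0 => `|x i 0 k0|) k).
have h3 : `|x i 0 k - z i 0 k| <= 1 + (x i 0 k - z i 0 k) ^+ 2.
  set u := x i 0 k - z i 0 k.
  have := normr_ge0 u; rewrite -[u ^+ 2]real_normK ?num_real //; nra.
have h4 : `|z i 0 k| <= `|x i 0 k| + `|x i 0 k - z i 0 k|.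
  rewrite {1}(_ : z i 0 k = x i 0 k - (x i 0 k - z i 0 k)); last by rewrite opprB addrC subrK.
  exact: ler_normB.
lra.
Qed.

Lemma part2 (R : realType) (m n : nat) (x : 'I_m -> 'rV[R]_n) (lam : R)
  (w : 'I_m -> 'I_m -> R) (alpha : nat -> R) (zf : R -> 'I_m -> 'rV[R]_n)
  (hlam : 0 <= lam)
  (hw : forall i j : 'I_m, (i < j)%N -> 0 <= w i j)
  (hapos : forall t, 0 < alpha t)
  (hmin : forall a : R, 0 < a -> forall y : 'I_m -> 'rV[R]_n,
            gfun x lam w (zf a) a <= gfun x lam w y a) :
  exists p, seq_limit_point (fun t => zf (alpha t)) p.
Proof.
set M := \sum_(i0 < m) \sum_(k0 < n) `|x i0 0 k0| + 1 + phi x lam w x.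
have hb : forall t i k, `|zf (alpha t) i 0 k| <= M.
  move=> t i k; apply: (@coord_bound _ _ _ x lam w (zf (alpha t)) (alpha t)) => //.
    exact: ltW.
  apply: le_trans (hmin _ (hapos t) x) _; exact: g_le_phi.
pose U t : 'rV[R]_(m * n) := mxvec (\matrix_(i, k) zf (alpha t) i 0 k).
have Kc : compact [set v : 'rV[R]_(m * n) | forall c, `[-M, M]%classic (v ord0 c)].
  apply: (@rV_compact _ _ (fun=> `[-M, M]%classic)) => _; exact: segment_compact.
have FK : (U @ \oo) [set v : 'rV[R]_(m * n) | forall c, `[-M, M]%classic (v ord0 c)].
  exists 0%N => // t _ /= c.
  case/mxvec_indexP: c => i k.
  by rewrite mxvecE mxE /= in_itv /= -ler_norml hb.
have [v [Kv clv]] := Kc _ _ FK.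
exists (fun i => \row_k (vec_mx v) i k).
move=> eps eps0 N.
set N' : R := (m * n)%:R.
have N'0 : 0 <= N' by rewrite /N' ler0n.
set e := eps / (N' + 1).
have hN1 : 0 < N' + 1 by lra.
have he : e * (N' + 1) = eps by rewrite /e divfK // gt_eqF.
have e0 : 0 < e by rewrite /e divr_gt0.
have := clv (U @` [set t | (N <= t)%N]) (ball v e) _ (nbhsx_ballx v e e0).
case.
  by apply: filterS (nbhs_infty_ge N) => t Nt; exists t.
move=> _ [[t tN <-] bt].
exists t; split => //.
move: bt; rewrite /ball /= => -[_ bt].
have hS : \sum_(i < m) enorm (zf (alpha t) i - \row_k (vec_mx v) i k) ^+ 2 <= N' * e ^+ 2.
  apply: le_trans (_ : \sum_(i < m) \sum_(k < n) e ^+ 2 <= _); last first.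
    rewrite sumr_const sumr_const !card_ord -mulrnA /N' mulr_natl.
    by rewrite mulnC.
  apply: ler_sum => i _; rewrite enorm_sq; apply: ler_sum => k _.
  have := bt 0 (mxvec_index i k).
  rewrite /ball /= -{1}(vec_mxK v) !mxvecE !mxE.
  rewrite ltr_norml => /andP[h1 h2]; nra.
rewrite /cdist.
apply: le_lt_trans (_ : Num.sqrt (N' * e ^+ 2) < _).
  by rewrite ler_sqrt // mulr_ge0 // sqr_ge0.
rewrite -(ger0_norm (ltW eps0)) -sqrtr_sqr ltr_sqrt ?exprn_gt0 //.
rewrite -he; nra.
Qed.

Lemma part3 (R : realType) (m n : nat) (x : 'I_m -> 'rV[R]_n) (lam : R)
  (w : 'I_m -> 'I_m -> R) (alpha : nat -> R) (zf : R -> 'I_m -> 'rV[R]_n)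
  (hlam : 0 <= lam)
  (hw : forall i j : 'I_m, (i < j)%N -> 0 <= w i j)
  (hapos : forall t, 0 < alpha t)
  (hinf : alpha @ \oo --> +oo)
  (hmin : forall a : R, 0 < a -> forall y : 'I_m -> 'rV[R]_n,
            gfun x lam w (zf a) a <= gfun x lam w y a) :
  forall p, seq_limit_point (fun t => zf (alpha t)) p ->
        forall y : 'I_m -> 'rV[R]_n, phi x lam w p <= phi x lam w y.
Proof.
move=> p hp y.
set u := fun t => zf (alpha t).
pose G := filter_from [set ne : nat * R | 0 < ne.2]
  (fun ne => [set t | (ne.1 <= t)%N /\ cdist (u t) p < ne.2]).
have GF : Filter G.
  apply: filter_from_filter; first by exists (0%N, 1); rewrite /= ltr01.
  move=> [N1 e1] [N2 e2] /= e10 e20; exists (maxn N1 N2, Num.min e1 e2) => /=.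
    by rewrite lt_min e10 e20.
  move=> t /= [+ +]; rewrite geq_max lt_min => /andP[h1 h2] /andP[h3 h4].
  by split; split.
have GP : ProperFilter G.
  apply: filter_from_proper => -[N e] /= e0.
  by have [t [tN ht]] := hp e e0 N; exists t.
have hcoord : forall t i k, `|p i 0 k - u t i 0 k| <= cdist (u t) p.
  move=> t i k; rewrite /cdist -sqrtr_sqr ler_sqrt; last first.
    by rewrite sumr_ge0 // => j _; exact: sqr_ge0.
  apply: le_trans _ (@le_sum1 _ _ (fun i => enorm (u t i - p i) ^+ 2) i _); last first.
    by move=> j; exact: sqr_ge0.
  rewrite enorm_sq.
  apply: le_trans _ (@le_sum1 _ _ (fun k => ((u t i - p i) 0 k) ^+ 2) k _); last first.
    by move=> j; exact: sqr_ge0.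
  by rewrite !mxE -sqrrN opprB.
have cz : forall i k, (fun t => u t i 0 k) @ G --> p i 0 k.
  move=> i k; apply/cvgrPdist_lt => e e0.
  exists (0%N, e) => // t /= [_ ht]; exact: le_lt_trans (hcoord t i k) ht.
have ca : alpha @ G --> +oo.
  apply/cvgryPge => A.
  have [N _ hN] := (cvgryPge alpha).1 hinf A.
  by exists (N, 1) => //= t [tN _]; exact: hN.
pose S t i j := \sum_(k < n) (u t i 0 k - u t j 0 k) ^+ 2.
pose Sp i j := \sum_(k < n) (p i 0 k - p j 0 k) ^+ 2.
have cS : forall i j, (fun t => S t i j) @ G --> Sp i j.
  move=> i j; apply: cvg_big; first exact: add_continuous.
  move=> k _; rewrite expr2.
  by apply: cvgM; apply: cvgB; apply: cz.
have cQ : forall i, (fun t => enorm (x i - u t i) ^+ 2) @ G --> enorm (x i - p i) ^+ 2.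
  move=> i; under eq_cvg do rewrite enorm_sq; rewrite enorm_sq.
  apply: cvg_big; first exact: add_continuous.
  move=> k _; under eq_cvg do rewrite !mxE; rewrite !mxE expr2.
  by apply: cvgM; apply: cvgB; [exact: cvg_cst| apply: cz | exact: cvg_cst | apply: cz].
have eS : forall t i j, enorm (u t i - u t j) ^+ 2 = S t i j.
  by move=> t i j; rewrite enorm_sq; apply: eq_bigr => k _; rewrite !mxE.
have eSp : forall i j, enorm (p i - p j) ^+ 2 = Sp i j.
  by move=> i j; rewrite enorm_sq; apply: eq_bigr => k _; rewrite !mxE.
pose h t := \sum_(i < m) enorm (x i - u t i) ^+ 2 +
  lam * \sum_(j < m) \sum_(i < m | (i < j)%N)
     w i j * (if Sp i j == 0 then 0 else 1 - expR (- (alpha t * S t i j))).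
have hle : forall t, h t <= phi x lam w y.
  move=> t; apply: le_trans _ (@g_le_phi _ _ _ x lam w y (alpha t) hlam hw).
  apply: le_trans _ (hmin _ (hapos t) y).
  rewrite /h /gfun lerD2l ler_wpM2l // ler_sum // => j _.
  rewrite ler_sum // => i ij; rewrite ler_wpM2l ?hw // eS.
  case: ifP => _; last by [].
  by rewrite -(eS t i j); apply: term_ge0; exact: ltW.
have cE : forall i j, Sp i j != 0 ->
    (fun t => expR (- (alpha t * S t i j))) @ G --> 0.
  move=> i j hne.
  have Sp0 : 0 < Sp i j.
    by rewrite lt_def hne /= sumr_ge0 // => k _; exact: sqr_ge0.
  have cP : (fun t => alpha t * S t i j) @ G --> +oo.
    apply/cvgryPge => A.
    have h1 := cvgr_ge _ (cS i j) (Sp i j / 2).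
    have h2 := (cvgryPge alpha).1 ca (2 * `|A| / Sp i j).
    have c1 : 2 * `|A| / Sp i j * (Sp i j / 2) = `|A|.
      by field; rewrite gt_eqF.
    have hA := ler_norm A.
    have hA0 := normr_ge0 A.
    have hh : Sp i j / 2 < Sp i j by lra.
    apply: (@filterS2 _ G GF _ _ _ _ (h1 GF hh) (h2 GF)) => t hS hal.
    have := hapos t.
    set c := 2 * `|A| / Sp i j in c1 hal.
    set d := Sp i j / 2 in c1 hS.
    have d0 : 0 < d by rewrite /d; lra.
    nra.
  by have := cvg_comp _ _ cP (@cvgr_expR R); apply.
have hcvg : h @ G --> phi x lam w p.
  rewrite /phi; apply: cvgD.
    apply: cvg_big; first exact: add_continuous.
    by move=> i _; exact: cQ.
  apply: cvgM; first exact: cvg_cst.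
  apply: cvg_big; first exact: add_continuous.
  move=> j _; apply: cvg_big; first exact: add_continuous.
  move=> i ij; apply: cvgM; first exact: cvg_cst.
  have [hz|hne] := eqVneq (Sp i j) 0.
    have -> : Defs.sfun (enorm (p i - p j)) = 0.
      have : enorm (p i - p j) ^+ 2 == 0 by rewrite eSp hz.
      by rewrite sqrf_eq0 => /eqP ->; rewrite /Defs.sfun eqxx.
    exact: cvg_cst.
  have -> : Defs.sfun (enorm (p i - p j)) = 1.
    rewrite /Defs.sfun ifF //; apply/negbTE; apply: contra hne => /eqP h0.
    by rewrite -eSp h0 expr0n.
  have := cvgB (@cvg_cst _ (1:R) _ G GF) (cE i j hne); rewrite subr0; apply.
rewrite leNgt; apply/negP => hlt.
have hev := @cvgr_gt R nat G GF h (phi x lam w p) hcvg (phi x lam w y) hlt.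
have [t ht] := @filter_ex _ G GP _ hev.
by have := hle t; rewrite leNgt ht.
Qed.

Theorem theorem1 (R : realType) (m n : nat) (x : 'I_m -> 'rV[R]_n) (lam : R)
  (w : 'I_m -> 'I_m -> R) (alpha : nat -> R) (zf : R -> 'I_m -> 'rV[R]_n)
  (hlam : 0 <= lam)
  (hw : forall i j : 'I_m, (i < j)%N -> 0 <= w i j)
  (hapos : forall t, 0 < alpha t)
  (hinc : forall t, alpha t < alpha t.+1)
  (hinf : alpha @ \oo --> +oo)
  (hmin : forall a : R, 0 < a -> forall y : 'I_m -> 'rV[R]_n,
            gfun x lam w (zf a) a <= gfun x lam w y a) :
  cvgn (fun t => gfun x lam w (zf (alpha t)) (alpha t))
  /\ (exists p, seq_limit_point (fun t => zf (alpha t)) p)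
  /\ (forall p, seq_limit_point (fun t => zf (alpha t)) p ->
        forall y : 'I_m -> 'rV[R]_n, phi x lam w p <= phi x lam w y).
Proof.
split; first exact: (@part1 R m n x lam w alpha zf hlam hw hapos hinc hmin).
split; first exact: (@part2 R m n x lam w alpha zf hlam hw hapos hmin).
exact: (@part3 R m n x lam w alpha zf hlam hw hapos hinf hmin).
Qed.
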